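(* Let $p,q$ be positive integers and $k,\ell$ positive integers with $k\le \ell$, and let $A=\{a_1<\cdots<a_p\}$, $B=\{b_1<\cdots<b_q\}$ be linearly ordered sets. Fix indices $i_1,\dots,i_{k-1}\in\{1,\dots,p\}$, and let $(G;A,B)$ be the ordered bipartite graph with edge set $$\{a_ib_j: 1\le i\le p,\ 1\le j\le \ell-1\}\cup\{a_{i_h}b_j: \ell\le j\le q,\ 1\le h\le k-1\}.$$ Suppose $k\le p$, $\ell\le q$ and $k\le p\le \ell-1$. Then (i) $(G;A,B)$ is $K_{k,\ell}$-interval minor free; (ii) $m(p,q,k,\ell)\geq (\ell-1)(p-k+1)+q(k-1)$.
   Context: An ordered bipartite graph $(G;A,B)$ is a simple bipartite graph $G$ with parts $A,B$, each equipped with a linear order. Two vertices $u<v$ of the same part are consecutive if no vertex $w$ of that part satisfies $u<w<v$. Identifying two consecutive vertices $u,v$ of a part replaces them by a single vertex $w$ (in their position in the order) with $N(w)=N(u)\cup N(v)$; the result is again a simple ordered bipartite graph. Two ordered bipartite graphs are isomorphic if there is a graph isomorphism between them mapping parts to parts (possibly exchanging the two parts) and preserving the linear orders of the parts. An ordered bipartite graph $H$ is an interval minor of $G$ if a graph isomorphic to $H$ can be obtained from $G$ by repeatedly deleting edges and identifying two consecutive vertices; $G$ is $H$-interval minor free otherwise. $m(p,q,k,\ell)$ denotes the maximum number of edges of an ordered bipartite graph with parts of sizes $p$ and $q$ that is $K_{k,\ell}$-interval minor free. *)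

(* Defs.v *)
From Stdlib Require Import Relations.
From mathcomp Require Import all_boot all_order.
From mathcomp Require Import boolp.
Set Implicit Arguments. Unset Strict Implicit. Unset Printing Implicit Defensive.

(* An ordered bipartite graph: part A = {0,..,np-1}, part B = {0,..,nq-1},
   both with the natural order of nat; adjacency is [adj x y] for x < np, y < nq
   (values of adj outside this range are irrelevant). *)
Record obg := OBG { np : nat; nq : nat; adj : nat -> nat -> bool }.

Definition nedges (G : obg) : nat :=
  #|[set xy : 'I_(np G) * 'I_(nq G) | adj G xy.1 xy.2]|.

Definition identA (G : obg) (i : nat) : obg :=
  OBG (np G).-1 (nq G)
    (fun x y => if x < i then adj G x y
                else if x == i then adj G i y || adj G i.+1 y
                else adj G x.+1 y).

Definition identB (G : obg) (j : nat) : obg :=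
  OBG (np G) (nq G).-1
    (fun x y => if y < j then adj G x y
                else if y == j then adj G x j || adj G x j.+1
                else adj G x y.+1).

Definition delE (G : obg) (a b : nat) : obg :=
  OBG (np G) (nq G) (fun x y => adj G x y && ~~ ((x == a) && (y == b))).

Inductive step : obg -> obg -> Prop :=
| step_del : forall G a b, a < np G -> b < nq G -> adj G a b -> step G (delE G a b)
| step_idA : forall G i, i.+1 < np G -> step G (identA G i)
| step_idB : forall G j, j.+1 < nq G -> step G (identB G j).

(* Isomorphism of ordered bipartite graphs: bijections between parts preserving
   the linear orders and adjacency, possibly exchanging the two parts. *)
Definition obg_iso (G H : obg) : Prop :=
  (exists (f : 'I_(np G) -> 'I_(np H)) (g : 'I_(nq G) -> 'I_(nq H)),
      [/\ bijective f, bijective g,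
          (forall x y : 'I_(np G), x < y -> f x < f y),
          (forall x y : 'I_(nq G), x < y -> g x < g y) &
          (forall (x : 'I_(np G)) (y : 'I_(nq G)), adj G x y = adj H (f x) (g y))])
  \/
  (exists (f : 'I_(np G) -> 'I_(nq H)) (g : 'I_(nq G) -> 'I_(np H)),
      [/\ bijective f, bijective g,
          (forall x y : 'I_(np G), x < y -> f x < f y),
          (forall x y : 'I_(nq G), x < y -> g x < g y) &
          (forall (x : 'I_(np G)) (y : 'I_(nq G)), adj G x y = adj H (g y) (f x))]).

Definition interval_minor (H G : obg) : Prop :=
  exists G', clos_refl_trans obg step G G' /\ obg_iso G' H.

Definition Kbip (k l : nat) : obg := OBG k l (fun _ _ => true).

Definition of_ffun (p q : nat) (E : {ffun 'I_p * 'I_q -> bool}) : obg :=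
  OBG p q (fun x y => match insub x, insub y with
                      | Some x', Some y' => E (x', y')
                      | _, _ => false end).

Definition m_ex (p q k l : nat) : nat :=
  \max_(E : {ffun 'I_p * 'I_q -> bool} |
          `[< ~ interval_minor (Kbip k l) (of_ffun E) >])
     nedges (of_ffun E).

(* The graph of Lemma 2.3 (0-based indices; ih h = i_{h+1} - 1). *)
Definition G23 (p q l : nat) (k : nat) (ih : 'I_k.-1 -> 'I_p) : obg :=
  OBG p q (fun x y => [&& x < p, y < q &
                         (y < l.-1) || [exists h, (ih h : nat) == x]]).
Arguments G23 p q l {k} ih.

(* Main.v *)
Require Import Defs.
From mathcomp Require Import all_boot all_order.
From mathcomp Require Import boolp zify.
From Stdlib Require Import Relations.

Definition Inv (k l : nat) (G : obg) : Prop :=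
  np G <= l.-1 /\ exists c s, [/\ c <= l.-1, size s <= k.-1 &
    forall x y, x < np G -> y < nq G -> c <= y -> adj G x y -> x \in s].

Lemma inv_step k l G G' : step G G' -> Inv k l G -> Inv k l G'.
Proof.
move=> st; rewrite /Inv; case: st => {G G'} [G a b _ _ _ | G i Hi | G j Hj] [Hnp [c [s [Hc Hs H]]]].
- split=> //. exists c, s; split=> // x y Hx Hy Hcy /= /andP [Ha _]; exact: (H x y Hx Hy Hcy Ha).
- split; first by rewrite /=; lia.
  exists c, [seq (if r <= i then r else r.-1) | r <- s]; split=> //;
    first by rewrite size_map.
  move=> x y /= Hx Hy Hcy.
  case: ltnP => Hxi.
    move=> E; apply/mapP; exists x; [apply: (H x y) => //; lia | by rewrite (ltnW Hxi)].
  case: eqP => [-> | Hne].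
    case/orP => E; apply/mapP; [exists i | exists i.+1].
    + by apply: (H i y) => //; lia.
    + by rewrite leqnn.
    + by apply: (H i.+1 y) => //; lia.
    + by rewrite ltnn.
  move=> E; apply/mapP; exists x.+1; first by apply: (H x.+1 y) => //; lia.
  have -> : (x.+1 <= i) = false by lia.
  by [].
- split=> //.
  exists (if j.+1 < c then c.-1 else c), s; split=> //; first by case: ifP; lia.
  move=> x y /= Hx Hy Hcy.
  case: ltnP => Hyj.
    by apply: (H x y) => //; [lia | move: Hcy; case: ifP; lia].
  case: eqP => [Hyj' | Hne].
    subst y; case/orP => E.
    + by apply: (H x j) => //; [lia | move: Hcy; case: ifP; lia].
    + by apply: (H x j.+1) => //; move: Hcy; case: ifP; lia.
  by apply: (H x y.+1) => //; [lia | move: Hcy; case: ifP; lia].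
Qed.

Lemma inv_rt k l G G' : clos_refl_trans obg step G G' -> Inv k l G -> Inv k l G'.
Proof.
elim=> {G G'}.
- exact: inv_step.
- by [].
- by move=> G1 G2 G3 _ IH1 _ IH2 /IH1 /IH2.
Qed.

Lemma not_K k l G : Inv k l G -> 0 < k -> 0 < l -> ~ obg_iso G (Kbip k l).
Proof.
rewrite /Inv => -[Hnp [c [s [Hc Hs H]]]] k0 l0 [[f [g [bf bg _ _ Hadj]]] | [f [g [bf bg _ _ _]]]].
- have ek : np G = k by move: (bij_eq_card bf); rewrite !card_ord.
  have el : nq G = l by move: (bij_eq_card bg); rewrite !card_ord.
  have sub : {subset iota 0 k <= s}.
    move=> x; rewrite mem_iota add0n => /andP[_ xk].
    have xn : x < np G by rewrite ek.
    have yn : l.-1 < nq G by rewrite el; lia.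
    apply: (H x l.-1) => //.
    by have := Hadj (Ordinal xn) (Ordinal yn).
  have := uniq_leq_size (iota_uniq 0 k) sub. rewrite size_iota. lia.
- have := bij_eq_card bf; rewrite !card_ord /= => E; lia.
Qed.

Lemma sum_lt n m : m <= n -> \sum_(i < n) (i < m : nat) = m.
Proof.
move=> H; rewrite -(subnKC H) big_split_ord /=.
rewrite (eq_bigr (fun _ => 1)); last by move=> i _; rewrite ltn_ord.
rewrite [X in _ + X]big1; last by move=> i _; rewrite ltnNge leq_addr.
by rewrite sum1_card card_ord addn0.
Qed.

Theorem lemma2p3 (p q k l : nat) (ih : 'I_k.-1 -> 'I_p) :
  0 < p -> 0 < q -> 0 < k -> 0 < l -> k <= l ->
  k <= p -> l <= q -> p <= l.-1 ->
  ~ interval_minor (Kbip k l) (G23 p q l ih) /\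
  (l.-1 * (p - k + 1) + q * k.-1 <= m_ex p q k l).
Proof.
move=> p0 q0 k0 l0 kl kp lq pl.
split.
  move=> [G' [Hrt Hiso]]; apply: (@not_K k l G' _ k0 l0 Hiso); apply: (@inv_rt k l _ _ Hrt).
  split=> //; exists l.-1, [seq (ih h : nat) | h <- enum 'I_k.-1]; split=> //.
    by rewrite size_map size_enum_ord.
  move=> x y Hx Hy Hcy /= /and3P [_ _ /orP [E | /existsP [h /eqP E]]]; first lia.
  by apply/mapP; exists h; rewrite ?mem_enum.
pose E := [ffun xy : 'I_p * 'I_q => (xy.2 < l.-1) || (xy.1 < k.-1)].
have nK : ~ interval_minor (Kbip k l) (of_ffun E).
  move=> [G' [Hrt Hiso]]; apply: (@not_K k l G' _ k0 l0 Hiso); apply: (@inv_rt k l _ _ Hrt).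
  split=> //; exists l.-1, (iota 0 k.-1); split=> //; first by rewrite size_iota.
  move=> x y Hx Hy Hcy /=.
  case: insubP => // x' _ ex; case: insubP => // y' _ ey.
  rewrite ffunE /= ex ey => /orP [?|?]; first lia.
  by rewrite mem_iota.
apply: leq_trans (leq_bigmax_cond _ (asboolT nK)).
rewrite /nedges /=.
have -> : #|[set xy : 'I_p * 'I_q | adj (of_ffun E) xy.1 xy.2]| =
          \sum_(x < p) \sum_(y < q) ((y < l.-1) || (x < k.-1) : nat).
  rewrite pair_bigA /= -sum1_card big_mkcond /=.
  apply: eq_bigr => xy _; rewrite inE /= !valK ffunE.
  by case: ((xy.2 < l.-1) || (xy.1 < k.-1)).
have kp' : k.-1 <= p by lia.
have -> : \sum_(x < p) \sum_(y < q) ((y < l.-1) || (x < k.-1) : nat) =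
          k.-1 * q + (p - k.-1) * l.-1.
  rewrite -[in LHS](subnKC kp') big_split_ord /=; congr (_ + _).
  - rewrite (eq_bigr (fun _ => q)) ?sum_nat_const ?card_ord // => i _.
    rewrite (eq_bigr (fun _ => 1)); last by move=> j _; rewrite ltn_ord orbT.
    by rewrite sum1_card card_ord.
  - rewrite (eq_bigr (fun _ => l.-1)) ?sum_nat_const ?card_ord // => i _.
    rewrite -[in RHS](@sum_lt q l.-1); last lia.
    by apply: eq_bigr => j _; rewrite [_ + _ < _]ltnNge leq_addr orbF.
have -> : p - k + 1 = p - k.-1 by lia.
by rewrite [q * _]mulnC [(p - _) * _]mulnC addnC.
Qed.
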